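(* Let $\mathcal{D}\subset\mathbb{R}^d$ be bounded and convex with non-empty interior. Assume $\mathcal{C}\subset\Gamma\backslash G$ is compact and $\theta>\overline\rho(\mathcal{C},\mathcal{D}\times(0,1])$. Then \[F(M,t)\leq\theta^{d+1}\] for all $M$ with $\Gamma M\in\mathcal{C}D(\theta)^{-1}$ and all $t\in\mathcal{D}$.
   Context: Let $G=\operatorname{SL}(d+1,\mathbb{R})$ and $\Gamma=\operatorname{SL}(d+1,\mathbb{Z})$; vectors are row vectors and $\mathbb{Z}^{d+1}M$ is the lattice spanned by the rows of $M$. For $M\in G$, $t\in\mathcal{D}$: $F(M,t)=\min\{y>0\mid (x,y)\in\mathbb{Z}^{d+1}M,\ x+t\in\mathcal{D}\}$ ($x\in\mathbb{R}^d$, $y\in\mathbb{R}$), and $\infty$ if no minimum exists. For a bounded $\mathcal{A}\subset\mathbb{R}^{d+1}$ with non-empty interior, the covering radius is $\rho(M,\mathcal{A})=\inf\{\theta>0\mid \theta\mathcal{A}+\mathbb{Z}^{d+1}M=\mathbb{R}^{d+1}\}$, and for $\mathcal{C}\subset\Gamma\backslash G$, $\overline\rho(\mathcal{C},\mathcal{A})=\sup_{\Gamma M\in\mathcal{C}}\rho(M,\mathcal{A})$. For $\theta>0$, $D(\theta)=\operatorname{diag}(\theta,\ldots,\theta,\theta^{-d})\in G$ (with $d$ entries $\theta$), and $\mathcal{C}D(\theta)^{-1}=\{\Gamma MD(\theta)^{-1}\mid \Gamma M\in\mathcal{C}\}$. *)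

(* Defs.v *)
From HB Require Import structures.
From mathcomp Require Import all_boot all_order all_algebra.
From mathcomp Require Import all_classical all_reals all_analysis.
Set Implicit Arguments. Unset Strict Implicit. Unset Printing Implicit Defensive.
Import Order.TTheory GRing.Theory Num.Theory.
Import numFieldNormedType.Exports.
Local Open Scope classical_set_scope.
Local Open Scope ring_scope.

Section Defs.
Variables (R : realType) (d : nat).

(* Row vectors in R^(d+1) are written (x, y) with x in R^d, y in R. *)
Local Notation V := 'rV[R]_(d + 1).
Local Notation Mat := 'M[R]_(d + 1).

Definition SLR : set Mat := [set M | \det M = 1].

Definition SLZ : set Mat :=
  [set M | exists N : 'M[int]_(d + 1), \det N = 1 /\ M = map_mx intr N].

Definition lattice (M : Mat) : set V :=
  [set v | exists a : 'rV[int]_(d + 1), v = map_mx intr a *m M].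

Definition Fset (D : set 'rV[R]_d) (M : Mat) (t : 'rV[R]_d) : set R :=
  [set y | 0 < y /\ exists v, lattice M v /\ lsubmx v + t \in D /\ rsubmx v = y%:M].

(* F(M,t) = min of Fset, and +oo if no minimum exists *)
Definition F (D : set 'rV[R]_d) (M : Mat) (t : 'rV[R]_d) : \bar R :=
  if `[< exists y, Fset D M t y /\ forall y', Fset D M t y' -> y <= y' >]
  then ereal_inf [set y%:E | y in Fset D M t]
  else +oo%E.

Definition covrad (M : Mat) (A : set V) : \bar R :=
  ereal_inf [set th%:E | th in
    [set th : R | 0 < th /\
       forall z : V, exists a l, A a /\ lattice M l /\ z = th *: a + l]].

(* A subset C of Gamma\G is represented by its (Gamma-saturated) preimage in G.
   rhobar(C, A) = sup over Gamma M in C of rho(M, A) *)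
Definition covrad_sup (C : set Mat) (A : set V) : \bar R :=
  ereal_sup [set covrad M A | M in C].

Definition Dtheta (th : R) : Mat :=
  block_mx (th%:M : 'M[R]_d) 0 0 ((th ^- d)%:M : 'M[R]_1).

Definition cyl (D : set 'rV[R]_d) : set V :=
  [set v | D (lsubmx v) /\ 0 < rsubmx v ord0 ord0 <= 1].

(* C (given as a subset of G) is left Gamma-invariant, i.e. the preimage of a
   subset of Gamma\G *)
Definition Gamma_saturated (C : set Mat) : Prop :=
  C `<=` SLR /\ forall g M, SLZ g -> C M -> C (g *m M).

(* compactness of a subset of Gamma\G in the quotient topology: every cover by
   open subsets of Gamma\G (= Gamma-saturated subsets of G that are open in the
   subspace topology of G) has a finite subcover *)
Definition quotient_compact (C : set Mat) : Prop :=
  forall (I : Type) (U : I -> set Mat),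
    (forall i, open (U i) /\ Gamma_saturated (U i `&` SLR)) ->
    C `<=` \bigcup_i (U i `&` SLR) ->
    exists J : set I, finite_set J /\ C `<=` \bigcup_(i in J) (U i `&` SLR).

End Defs.

(* Main.v *)
Require Import Defs.
From HB Require Import structures.
From mathcomp Require Import all_boot all_order all_algebra.
From mathcomp Require Import all_classical all_reals all_analysis.
From mathcomp Require Import zify.
Import Order.TTheory GRing.Theory Num.Theory.
Import numFieldNormedType.Exports.
Local Open Scope classical_set_scope.
Local Open Scope ring_scope.

Lemma entry_le (R : realType) m n (x : 'M[R]_(m, n)) i j : `|x i j| <= `|x|.
Proof.
have -> : `|x| = mx_norm x by [].
rewrite mx_normrE; exact: (le_bigmax _ (fun ij : 'I_m * 'I_n => `|x ij.1 ij.2|) (i, j)).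
Qed.
Arguments entry_le {R m n} x i j.

Lemma lat_bound (R : realType) (d : nat) (M : 'M[R]_(d + 1)) (B : R)
  (a : 'rV[int]_(d + 1)) :
  M \in unitmx -> (forall i, `|(map_mx intr a *m M) 0 i| <= B) ->
  forall j, `|(a 0 j)%:~R : R| <= B * \sum_i \sum_k `|invmx M i k|.
Proof.
move=> Mu hB j.
have B0 : 0 <= B by apply: le_trans (hB j).
have -> : (a 0 j)%:~R = (map_mx intr a *m M *m invmx M) 0 j by rewrite mulmxK // mxE.
rewrite mxE; apply: le_trans (ler_norm_sum _ _ _) _.
rewrite mulr_sumr; apply: ler_sum => i _.
rewrite normrM; apply: le_trans (_ : B * `|invmx M i j| <= _).
  by rewrite ler_wpM2r.
rewrite ler_wpM2l // (bigD1 j) //= lerDl sumr_ge0 // => k _.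
Qed.

Lemma minex (R : realType) (d : nat) (D : set 'rV[R]_d) (M : 'M[R]_(d + 1)) t :
  bounded_set D -> \det M = 1 -> t \in D -> forall y0, Fset D M t y0 ->
  exists y, Fset D M t y /\ forall y', Fset D M t y' -> y <= y'.
Proof.
move=> bD detM tD y0 Fy0.
have [r r0 hr] := pinfty_ex_gt0 bD.
have Mu : M \in unitmx by rewrite unitmxE detM unitr1.
have y00 : 0 < y0 by case: Fy0.
set B := r + r + y0.
have vb : forall v y', 0 < y' -> y' <= y0 -> lsubmx v + t \in D ->
    rsubmx v = y'%:M -> forall i, `|v 0 i| <= B.
  move=> v y' y'0 y'le vD hv i.
  rewrite -[v]hsubmxK; case: (fintype.split i) (splitK i) => [j|k] <- /=.
    rewrite row_mxEl.
    have -> : lsubmx v 0 j = (lsubmx v + t) 0 j - t 0 j by rewrite [in RHS]mxE addrK.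
    apply: le_trans (ler_normB _ _) _.
    rewrite /B -addrA; apply: lerD.
      by apply: le_trans (entry_le _ _ _) _; apply: hr; rewrite -in_setE.
    apply: le_trans (entry_le _ _ _) _; apply: le_trans (_ : r <= _).
      apply: hr; by rewrite -in_setE.
    by rewrite lerDl ltW.
  rewrite row_mxEr hv (ord1 k) mxE eqxx mulr1n gtr0_norm // /B.
  by apply: le_trans y'le _; rewrite lerDr addr_ge0 // ltW.
set S := \sum_i \sum_k `|invmx M i k|.
have BS0 : 0 <= B * S.
  apply: mulr_ge0; first by rewrite /B !addr_ge0 // ltW.
  by apply: sumr_ge0 => i _; apply: sumr_ge0.
set K := Num.Def.archi_bound (B * S).
have hK := archi_boundP BS0; rewrite -/K in hK.
have ab : forall (a : 'rV[int]_(d + 1)) y', 0 < y' -> y' <= y0 ->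
    lsubmx (map_mx intr a *m M) + t \in D ->
    rsubmx (map_mx intr a *m M) = y'%:M -> forall j, (`|a 0 j| < K%:Z)%R.
  move=> a y' y'0 y'le aD ha j.
  have := @lat_bound R d M B a Mu (vb _ _ y'0 y'le aD ha) j.
  rewrite -intr_norm => h.
  have : (`|a 0 j|%:~R : R) < (K%:Z)%:~R by apply: le_lt_trans h hK.
  by rewrite ltr_int.
pose vec (f : {ffun 'I_(d + 1) -> 'I_(K + K).+1}) : 'rV[int]_(d + 1) :=
  \row_j ((f j : nat)%:Z - K%:Z).
have enc : forall a : 'rV[int]_(d + 1), (forall j, (`|a 0 j| < K%:Z)%R) ->
    exists f, vec f = a.
  move=> a ha; exists [ffun j => inord (absz (a 0 j + K%:Z))].
  apply/rowP => j; rewrite !mxE ffunE inordK.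
    have := ha j; lia.
  have := ha j; lia.
pose vv f := map_mx intr (vec f) *m M.
pose g f := rsubmx (vv f) ord0 ord0.
pose P := [pred f | `[< 0 < g f /\ lsubmx (vv f) + t \in D >] && (g f <= y0)].
have gE : forall f y', rsubmx (vv f) = y'%:M -> g f = y'.
  by move=> f y' h; rewrite /g h mxE eqxx mulr1n.
have Pgood : forall (a : 'rV[int]_(d + 1)) y', 0 < y' -> y' <= y0 ->
    lsubmx (map_mx intr a *m M) + t \in D ->
    rsubmx (map_mx intr a *m M) = y'%:M -> exists2 f, P f & g f = y'.
  move=> a y' y'0 y'le aD ha.
  have [f hf] := enc a (ab a y' y'0 y'le aD ha).
  have gf : g f = y' by apply: gE; rewrite /vv hf.
  exists f => //; rewrite inE gf y'le andbT; apply/asboolP; split => //.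
  by rewrite /vv hf.
have [_ [v0 [[b0 ->] [v0D v0r]]]] := Fy0.
have [f0 Pf0 _] := Pgood b0 y0 y00 (lexx _) v0D v0r.
case: (arg_minP g Pf0) => f Pf minf.
move: Pf; rewrite inE => /andP[/asboolP[gf0 fD] gfy0].
exists (g f); split.
  split => //; exists (vv f); split; first by exists (vec f).
  by split => //; rewrite [LHS]mx11_scalar.
move=> y' [y'0 [v' [[a' ->] [v'D v'r]]]].
case: (leP y' y0) => hy; last by apply: le_trans gfy0 (ltW hy).
have [f' Pf' <-] := Pgood a' y' y'0 hy v'D v'r.
exact: minf.
Qed.

Lemma Dtheta_mul (R : realType) (d : nat) th (v : 'rV[R]_(d + 1)) :
  lsubmx (v *m Dtheta d th) = th *: lsubmx v /\
  rsubmx (v *m Dtheta d th) = th ^- d *: rsubmx v.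
Proof.
rewrite -[v]hsubmxK /Dtheta mul_row_block !mulmx0 addr0 add0r !mul_mx_scalar.
by rewrite row_mxKl row_mxKr !row_mxKl !row_mxKr.
Qed.

Theorem proposition2p3 (R : realType) (d : nat) (D : set 'rV[R]_d)
  (C : set 'M[R]_(d + 1)) (theta : R) :
  bounded_set D -> convex_set D -> interior D !=set0 ->
  Gamma_saturated C -> quotient_compact C ->
  (covrad_sup C (cyl D) < theta%:E)%E ->
  forall (M : 'M[R]_(d + 1)) (t : 'rV[R]_d),
    \det M = 1 -> C (M *m Dtheta d theta) -> t \in D ->
    (F D M t <= (theta ^+ (d + 1))%:E)%E.
Proof.
move=> bD cD _ _ _ hsup M t detM CM tD.
have hcov : (covrad (M *m Dtheta d theta) (cyl D) < theta%:E)%E.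
  apply: le_lt_trans hsup; apply: ereal_sup_ubound; by exists (M *m Dtheta d theta).
have [_ [th [th0 hth] <-] ltth] := ereal_inf_lt hcov.
rewrite lte_fin in ltth.
have th0' : 0 < theta by apply: lt_trans ltth.
have [a [l [[aD /andP[a0 a1]] [[b ->] hz]]]] := hth (row_mx (th *: t) 0).
set w := - (map_mx intr b *m M).
have lw : lattice M w by exists (- b); rewrite /w map_mxN mulNmx.
have [hl hr] := @Dtheta_mul R d theta w.
have ew : w *m Dtheta d theta = th *: a - row_mx (th *: t) 0.
  by rewrite /w mulNmx -mulmxA hz opprD addrA subrr add0r.
have eL : lsubmx (th *: a - row_mx (th *: t) 0) = th *: lsubmx a - th *: t.
  by rewrite -{1}[a]hsubmxK scale_row_mx opp_row_mx add_row_mx row_mxKl.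
have eR : rsubmx (th *: a - row_mx (th *: t) 0) = th *: rsubmx a.
  by rewrite -{1}[a]hsubmxK scale_row_mx opp_row_mx add_row_mx row_mxKr oppr0 addr0.
rewrite ew eL in hl; rewrite ew eR in hr.
have thn0 : theta != 0 by rewrite gt_eqF.
have lw1 : lsubmx w = (th / theta) *: lsubmx a - (th / theta) *: t.
  by apply: (@scalerI _ _ theta) => //; rewrite -hl scalerBr !scalerA !mulrA !(mulrC theta) -!mulrA divff // !mulr1.
have rw1 : rsubmx w = (theta ^+ d * th * rsubmx a ord0 ord0)%:M.
  have -> : rsubmx w = theta ^+ d *: (th *: rsubmx a).
    by rewrite hr scalerA mulfV ?scale1r // expf_neq0.
  by rewrite {1}(mx11_scalar (rsubmx a)) !scale_scalar_mx mulrA.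
have l0 : 0 <= th / theta by rewrite divr_ge0 // ltW.
have l1 : th / theta <= 1 by rewrite ler_pdivrMr // mul1r ltW.
have hD := cD _ _ (Itv01 l0 l1) (mem_set aD) tD.
have inD : lsubmx w + t \in D.
  move: hD; congr (_ \in D); rewrite lw1 /=.
  rewrite -addrA; congr (_ + _); by rewrite /unstable.onem /= scalerBl scale1r addrC.
set y := theta ^+ d * th * rsubmx a ord0 ord0.
have Fy : Fset D M t y.
  split; first by rewrite /y !mulr_gt0 // exprn_gt0.
  by exists w.
have yle : y <= theta ^+ (d + 1).
  rewrite addn1 exprSr /y -mulrA ler_pM2l ?exprn_gt0 // -[X in _ <= X]mulr1.
  by rewrite ler_pM // ltW.
rewrite /F; case: asboolP => [_|hn]; last first.
  by exfalso; apply: hn; exact: (@minex R d D M t bD detM tD y Fy).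
apply: le_trans (_ : (y%:E <= _)%E); last by rewrite lee_fin.
by apply: ereal_inf_lbound; exists y.
Qed.
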